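(* Consider the control system $\dot x=f(x,u)$, where $f\colon\mathcal{X}\times\mathcal{U}\to\mathbb{R}^n$ is continuous on a neighborhood $\mathcal{X}\times\mathcal{U}\subseteq\mathbb{R}^n\times\mathbb{R}^m$ of the origin with $f(0,0)=0$, let $d$ be a nonnegative function on a neighborhood of $0\in\mathbb{R}^n$, and suppose the system is locally asymptotically stabilizable and $u$ is a stabilizing feedback with $\|u(x)\|\le d(x)$ for all sufficiently small $\|x\|$. Write $F_u(x):=f(x,u(x))$, $$g_f(r):=\Gamma_0\big(f(\mathbb{B}_r(0,0))\big),\quad g_{F_u}(r):=\Gamma_0\big(F_u(\mathbb{B}_r(0))\big),\quad h(r):=\sup_{y\in\mathbb{B}_r(0)}\|F_u^{-1}(y)\|.$$ Then $$g_{F_u}\big(h(r)\big)\ \le\ g_f\left(\sqrt{\|d\|^2_{\mathbb{B}_{h(r)}(0)}+h(r)^2}\right)\quad\text{for all sufficiently small } r>0.$$ Moreover, $g_{F_u}(h(r))\ge r$ for all sufficiently small $r>0$, so that this condition implies $r\le g_f\big(\sqrt{\|d\|^2_{\mathbb{B}_{h(r)}(0)}+h(r)^2}\big)$ for all sufficiently small $r>0$.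
   Context: $\mathbb{B}_r(z)$ denotes the open ball of radius $r$ centered at $z$; on $\mathbb{R}^n\times\mathbb{R}^m$ the norm is $\|(x,u)\|=\sqrt{\|x\|^2+\|u\|^2}$. The inradius of a set $K$ at $z^*$ is $\Gamma_{z^*}(K)=\sup\{\rho\ge0:\mathbb{B}_\rho(z^* )\subseteq K\}$; $\|d\|_{\mathbb{B}_\rho(0)}:=\sup_{x\in\mathbb{B}_\rho(0)}d(x)$. A stabilizing feedback is a map $u\colon\mathcal{O}\to\mathcal{U}$ on a neighborhood $\mathcal{O}$ of the origin with $u(0)=0$ such that the origin is a locally asymptotically stable equilibrium of $\dot x=f(x,u(x))$, with $x\mapsto f(x,u(x))$ continuous and $\dot x=f(x,u(x))$ having a unique solution for all $t$ from every initial condition near the origin; the system is locally asymptotically stabilizable if such $u$ exists. For such $u$, $F_u$ restricted to a suitable neighborhood of the origin is a homeomorphism onto a neighborhood of the origin, and $F_u^{-1}$ denotes this local inverse. *)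

(* Defs.v *)
From HB Require Import structures.
From mathcomp Require Import all_boot all_order all_algebra.
From mathcomp Require Import all_classical all_reals all_analysis.
Set Implicit Arguments. Unset Strict Implicit. Unset Printing Implicit Defensive.
Import Order.TTheory GRing.Theory Num.Theory.
Import numFieldNormedType.Exports.
Local Open Scope classical_set_scope.
Local Open Scope ring_scope.

Section Defs.
Variable R : realType.

Definition enorm (k : nat) (x : 'rV[R]_k) : R :=
  Num.sqrt (\sum_(i < k) x ord0 i ^+ 2).

Definition pnorm (n m : nat) (z : 'rV[R]_n * 'rV[R]_m) : R :=
  Num.sqrt (enorm z.1 ^+ 2 + enorm z.2 ^+ 2).

Definition eball (k : nat) (e : \bar R) : set 'rV[R]_k :=
  [set x | ((enorm x)%:E < e)%E].
Definition pball (n m : nat) (e : \bar R) : set ('rV[R]_n * 'rV[R]_m) :=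
  [set z | ((pnorm z)%:E < e)%E].

Definition inradius0 (k : nat) (K : set 'rV[R]_k) : \bar R :=
  ereal_sup [set (rho%:E)%E | rho in [set rho : R | 0 <= rho /\ @eball k rho%:E `<=` K]].

(* g_f(r) = Gamma_0 (f (B_r(0,0))) ; f only defined on X x U. *)
Definition g_f (n m : nat) (X : set 'rV[R]_n) (U : set 'rV[R]_m)
  (f : 'rV[R]_n * 'rV[R]_m -> 'rV[R]_n) (r : \bar R) : \bar R :=
  inradius0 (f @` (@pball n m r `&` (X `*` U))).

Definition Fu (n m : nat) (f : 'rV[R]_n * 'rV[R]_m -> 'rV[R]_n)
  (u : 'rV[R]_n -> 'rV[R]_m) (x : 'rV[R]_n) : 'rV[R]_n := f (x, u x).

(* g_{F_u}(r) = Gamma_0 (F_u (B_r(0))) ; F_u only defined on O. *)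
Definition g_Fu (n m : nat) (O : set 'rV[R]_n)
  (f : 'rV[R]_n * 'rV[R]_m -> 'rV[R]_n) (u : 'rV[R]_n -> 'rV[R]_m)
  (r : \bar R) : \bar R :=
  inradius0 (Fu f u @` (@eball n r `&` O)).

(* h(r) = sup_{y in B_r(0)} |F_u^{-1}(y)|, G the local inverse defined on W. *)
Definition h_inv (n : nat) (W : set 'rV[R]_n) (G : 'rV[R]_n -> 'rV[R]_n)
  (r : R) : \bar R :=
  ereal_sup [set ((enorm (G y))%:E)%E | y in @eball n r%:E `&` W].

(* ||d||_{B_rho(0)} = sup_{x in B_rho(0)} d(x), d defined on D. *)
Definition dsup (n : nat) (D : set 'rV[R]_n) (d : 'rV[R]_n -> R)
  (rho : \bar R) : \bar R :=
  ereal_sup [set ((d x)%:E)%E | x in @eball n rho `&` D].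

Definition esqrt_sumsq (a b : \bar R) : \bar R :=
  match a, b with
  | EFin a, EFin b => (Num.sqrt (a ^+ 2 + b ^+ 2))%:E
  | _, _ => +oo%E
  end.

Definition is_solution (n : nat) (O : set 'rV[R]_n) (F : 'rV[R]_n -> 'rV[R]_n)
  (x0 : 'rV[R]_n) (phi : R -> 'rV[R]_n) : Prop :=
  [/\ phi 0 = x0,
      (forall t : R, 0 <= t -> O (phi t)),
      {within [set t : R | 0 <= t], continuous phi} &
      (forall t : R, 0 < t -> is_derive t (1 : R) phi (F (phi t)))].

Definition stable_dynamics (n : nat) (O : set 'rV[R]_n)
  (F : 'rV[R]_n -> 'rV[R]_n) : Prop :=
  [/\
      (exists2 rho : R, 0 < rho & forall x0, enorm x0 < rho ->
         (exists phi, is_solution O (F) x0 phi) /\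
         (forall phi1 phi2, is_solution O (F) x0 phi1 ->
            is_solution O (F) x0 phi2 -> forall t, 0 <= t -> phi1 t = phi2 t)),
      (forall eps : R, 0 < eps -> exists2 delta : R, 0 < delta &
         forall x0 phi, enorm x0 < delta -> is_solution O (F) x0 phi ->
           forall t, 0 <= t -> enorm (phi t) < eps) &
      (exists2 eta : R, 0 < eta &
         forall x0 phi, enorm x0 < eta -> is_solution O (F) x0 phi ->
           forall eps : R, 0 < eps -> exists T : R, forall t, T <= t ->
             enorm (phi t) < eps)].



Definition stabilizing_feedback (n m : nat) (X : set 'rV[R]_n)
  (U : set 'rV[R]_m) (f : 'rV[R]_n * 'rV[R]_m -> 'rV[R]_n)
  (O : set 'rV[R]_n) (u : 'rV[R]_n -> 'rV[R]_m) : Prop :=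
  [/\ open O /\ O 0, O `<=` X, (forall x, O x -> U (u x)) /\ u 0 = 0,
      {within O, continuous (Fu f u)} &
      stable_dynamics O (Fu f u)].
End Defs.

(* Main.v *)
Require Import Defs.
From HB Require Import structures.
From mathcomp Require Import all_boot all_order all_algebra.
From mathcomp Require Import all_classical all_reals all_analysis.
From mathcomp.algebra_tactics Require Import lra.
Import Order.TTheory GRing.Theory Num.Theory.
Import numFieldNormedType.Exports.
Local Open Scope classical_set_scope.
Local Open Scope ring_scope.

Section H.
Context {R : realType} {n : nat}.
Implicit Types x y : 'rV[R]_n.

Lemma enorm_ge0 x : 0 <= enorm x.
Proof. exact: sqrtr_ge0. Qed.

Lemma coord_le_enorm x i : `|x ord0 i| <= enorm x.
Proof.
rewrite /enorm -sqrtr_sqr ler_sqrt; last by apply: sumr_ge0 => j _; exact: sqr_ge0.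
rewrite (bigD1 i) //= lerDl; apply: sumr_ge0 => j _; exact: sqr_ge0.
Qed.

Lemma mxnorm_le_enorm x : `|x| <= enorm x.
Proof.
rewrite (_ : `|x| = mx_norm x) // mx_normrE; apply: bigmax_le => [|[i j] _]; first exact: enorm_ge0.
by rewrite /= (ord1 i); exact: coord_le_enorm.
Qed.

Lemma enorm0 : enorm (0 : 'rV[R]_n) = 0.
Proof. by rewrite /enorm big1 ?sqrtr0 // => i _; rewrite mxE expr0n. Qed.

Lemma enorm_eq0 x : enorm x = 0 -> x = 0.
Proof.
move=> /eqP; rewrite /enorm sqrtr_eq0 => H.
have H0 : \sum_(i < n) x ord0 i ^+ 2 = 0.
  by apply/eqP; rewrite eq_le H sumr_ge0 // => j _; exact: sqr_ge0.
apply/rowP => i; rewrite mxE.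
have := (psumr_eq0P (P := predT) (F := fun i => x ord0 i ^+ 2)) _ H0 i isT.
by move=> /(_ (fun j _ => sqr_ge0 _)) /eqP; rewrite sqrf_eq0 => /eqP.
Qed.

Lemma enormZ (c : R) x : enorm (c *: x) = `|c| * enorm x.
Proof.
rewrite /enorm -sqrtr_sqr -sqrtrM ?sqr_ge0 // mulr_sumr; congr Num.sqrt.
by apply: eq_bigr => i _; rewrite mxE exprMn.
Qed.

Lemma enorm_continuous : continuous (@enorm R n).
Proof.
move=> x.
have hadd : continuous (fun z : R * R => z.1 + z.2) by exact: add_continuous.
have hs : continuous (fun y : 'rV[R]_n => \sum_(i < n) y ord0 i ^+ 2).
  have := (@continuous_big R 'I_n +%R 0 predT hadd _ (index_enum 'I_n) (fun i (y : 'rV[R]_n) => y ord0 i ^+ 2)).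
  apply.
  move=> i _ y; apply: (@continuous_comp _ _ _ (fun y : 'rV[R]_n => y ord0 i) (fun t : R => t ^+ 2)).
    exact: coord_continuous.
  exact: exprn_continuous.
exact: (@continuous_comp _ _ _ _ (@Num.sqrt R) x (hs x) (@sqrt_continuous R _)).
Qed.

Lemma enorm_unit : (0 < n)%N -> exists e : 'rV[R]_n, enorm e = 1.
Proof.
move=> n0; exists (delta_mx 0 (Ordinal n0)); rewrite /enorm (bigD1 (Ordinal n0)) //=.
rewrite big1 ?addr0 ?mxE ?eqxx ?expr1n ?sqrtr1 // => j /negbTE hj.
by rewrite mxE eq_sym hj andbF expr0n.
Qed.

Lemma within_ball (A P : set 'rV[R]_n) x : within A (nbhs x) P ->
  exists2 e : R, 0 < e & forall y, `|x - y| < e -> A y -> P y.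
Proof.
move=> /nbhs_ballP [e e0 H]; exists e => // y xy Ay.
apply: H => //; by rewrite -ball_normE.
Qed.

Lemma nbhs0_eball (A : set 'rV[R]_n) : nbhs (0 : 'rV[R]_n) A ->
  exists2 e : R, 0 < e & forall y, enorm y < e -> A y.
Proof.
move=> /nbhs_ballP [e e0 H]; exists e => // y ye.
apply: H; rewrite -ball_normE /= sub0r normrN.
exact: le_lt_trans (mxnorm_le_enorm _) ye.
Qed.

Lemma cont_enorm_lt (A : set 'rV[R]_n) (F : 'rV[R]_n -> 'rV[R]_n) x c :
  {within A, continuous F} -> A x -> enorm (F x) < c ->
  exists2 e : R, 0 < e & forall y, `|x - y| < e -> A y -> enorm (F y) < c.
Proof.
move=> /subspace_continuousP Fc Ax hc.
have h1 : ((@enorm R n) \o F) @ within A (nbhs x) --> enorm (F x).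
  apply: cvg_comp (Fc x Ax) _; exact: enorm_continuous.
have := @cvgr_dist_lt _ _ _ _ _ _ _ h1 (c - enorm (F x)).
rewrite subr_gt0 => /(_ _ hc) /within_ball [e e0 H].
exists e => // y xy Ay; have := H y xy Ay => /=.
have := ler_norm (enorm (F y) - enorm (F x)); rewrite distrC; lra.
Qed.
End H.

Theorem theorem6 (R : realType) (n m : nat) (n_gt0 : (0 < n)%N)
  (X : set 'rV[R]_n) (U : set 'rV[R]_m)
  (f : 'rV[R]_n * 'rV[R]_m -> 'rV[R]_n)
  (D : set 'rV[R]_n) (d : 'rV[R]_n -> R)
  (O : set 'rV[R]_n) (u : 'rV[R]_n -> 'rV[R]_m)
  (V W : set 'rV[R]_n) (G : 'rV[R]_n -> 'rV[R]_n) :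
  open X -> X 0 -> open U -> U 0 ->
  {within X `*` U, continuous f} -> f (0, 0) = 0 ->
  open D -> D 0 -> (forall x, D x -> 0 <= d x) ->
  stabilizing_feedback X U f O u ->
  (exists2 rho : R, 0 < rho & forall x, enorm x < rho -> enorm (u x) <= d x) ->
  (* F_u restricted to the neighborhood V is a homeomorphism onto the
     neighborhood W, with inverse G = F_u^{-1} *)
  nbhs (0 : 'rV[R]_n) V -> V `<=` O -> nbhs (0 : 'rV[R]_n) W ->
  (forall x, V x -> W (Fu f u x)) -> (forall y, W y -> V (G y)) ->
  (forall x, V x -> G (Fu f u x) = x) -> (forall y, W y -> Fu f u (G y) = y) ->
  {within W, continuous G} ->
  exists2 r0 : R, 0 < r0 & forall r : R, 0 < r < r0 ->
    [/\ (g_Fu O f u (h_inv W G r)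
           <= g_f X U f (esqrt_sumsq (dsup D d (h_inv W G r)) (h_inv W G r)))%E,
        (r%:E <= g_Fu O f u (h_inv W G r))%E &
        (r%:E <= g_f X U f (esqrt_sumsq (dsup D d (h_inv W G r)) (h_inv W G r)))%E].
Proof.
move=> oX X0 oU U0 fc f00 oD D0 dge0 [[oO O0] OX [uU u0] Fuc _] [rho rho0 ud].
move=> Vn VO Wn VW WV GF FG Gc.
have Fu0 : Fu f u 0 = 0 by rewrite /Fu u0.
have V0 : V 0 := nbhs_singleton Vn.
have W0 : W 0 := nbhs_singleton Wn.
have G0 : G 0 = 0 by rewrite -{1}Fu0 GF.
have [eV eV0 hV] := @nbhs0_eball R n V Vn.
have Dn : nbhs (0:'rV[R]_n) D by apply: open_nbhs_nbhs; split.
have [eD eD0 hD] := @nbhs0_eball R n D Dn.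
have [eW eW0 hW] := @nbhs0_eball R n W Wn.
pose d0 := Num.min (eV / 2) (Num.min rho eD).
have d0gt0 : 0 < d0 by rewrite /d0 !lt_min divr_gt0 // rho0 eD0.
have d0V : d0 <= eV / 2 by rewrite /d0 ge_min lexx.
have d0r : d0 <= rho by rewrite /d0 !ge_min lexx !orbT.
have d0D : d0 <= eD by rewrite /d0 !ge_min lexx !orbT.
have := @cont_enorm_lt R n W G 0 d0 Gc W0; rewrite G0 enorm0 => /(_ d0gt0) [eG eG0 hG].
exists (Num.min eW eG); first by rewrite lt_min eW0 eG0.
move=> r /andP[r0 rr0].
have rW : r < eW by move: rr0; rewrite lt_min => /andP[].
have rG : r < eG by move: rr0; rewrite lt_min => /andP[].
have inB : forall y, enorm y < r -> W y /\ enorm (G y) < d0.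
  move=> y yr; have Wy := hW y (lt_trans yr rW); split => //; apply: hG Wy.
  rewrite sub0r normrN; exact: le_lt_trans (mxnorm_le_enorm y) (lt_trans yr rG).
set h := h_inv W G r.
have hle : (h <= d0%:E)%E.
  apply: ge_ereal_sup => _ [y [yr Wy] <-]; rewrite lee_fin; apply: ltW.
  by apply: (inB y _).2; rewrite -lte_fin.
have strict : forall y, enorm y < r ->
    exists y', [/\ enorm y' < r, W y' & enorm (G y) < enorm (G y')].
  move=> y yr; have [Wy Gy] := inB y yr.
  have Vx := WV y Wy; have Ox := VO _ Vx; have Fx := FG y Wy.
  have [Gz|Gne] := eqVneq (enorm (G y)) 0.
    have [e1 e1n] := @enorm_unit R n n_gt0.
    pose y0 := (r / 2) *: e1.
    have y0r : enorm y0 = r / 2.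
      by rewrite enormZ e1n mulr1 ger0_norm // divr_ge0 // ltW.
    have y0r' : enorm y0 < r by rewrite y0r; lra.
    have Wy0 := (inB y0 y0r').1.
    exists y0; split => //; rewrite Gz lt_neqAle enorm_ge0 andbT.
    apply/eqP => /esym /enorm_eq0 H; have := FG y0 Wy0; rewrite H Fu0 => H'.
    by move: y0r; rewrite -H' enorm0; lra.
  have gpos : 0 < enorm (G y) by rewrite lt_neqAle eq_sym Gne enorm_ge0.
  have := @cont_enorm_lt R n O (Fu f u) (G y) r Fuc Ox; rewrite Fx => /(_ yr) [e e0 He].
  set x := G y in gpos Gy Vx Ox Fx He *.
  pose t := Num.min 1 (e / (2 * (`|x| + 1))).
  have nx0 : 0 <= `|x| := normr_ge0 _.
  have t0 : 0 < t by rewrite lt_min ltr01 divr_gt0 //; lra.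
  have t1 : t <= 1 by rewrite ge_min lexx.
  have hte : t <= e / (2 * (`|x| + 1)) by rewrite ge_min lexx orbT.
  rewrite ler_pdivlMr in hte; last lra.
  have te : t * `|x| < e by nra.
  pose x' := (1 + t) *: x.
  have ex' : enorm x' = (1 + t) * enorm x by rewrite enormZ ger0_norm //; lra.
  have Vx' : V x' by apply: hV; rewrite ex'; nra.
  have dx : `|x - x'| < e.
    rewrite /x' scalerDl scale1r opprD addrA subrr add0r normrN normrZ ger0_norm //.
    exact: ltW.
  have Fx' := He x' dx (VO _ Vx').
  exists (Fu f u x'); split => //; first exact: VW.
  by rewrite GF // ex'; nra.
have claim2 : (r%:E <= g_Fu O f u h)%E.
  apply: ereal_sup_ubound; exists r; last by [].
  split; first exact: ltW.
  move=> y; rewrite /eball /= lte_fin => yr.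
  have [Wy _] := inB y yr.
  exists (G y); last exact: FG.
  split; last exact: VO _ (WV _ Wy).
  rewrite /eball /=; have [y' [y'r Wy' lt']] := strict y yr.
  apply: (@lt_le_trans _ _ (enorm (G y'))%:E); first by rewrite lte_fin.
  apply: ereal_sup_ubound; exists y' => //; split => //.
have claim1 : (g_Fu O f u h <= g_f X U f (esqrt_sumsq (dsup D d h) h))%E.
  apply: ereal_sup_le => _ [rho' [rho0' sub] <-]; exists rho' => //; split => //.
  move=> z /sub [x [xh Ox] <-].
  exists (x, u x); last by [].
  split; last by split; [exact: OX | exact: uU].
  rewrite /pball /=.
  clear claim2 strict sub; clearbody h; move: xh hle; rewrite /eball /=.
  case: h => [b| |] //= xb bd0.
    rewrite lte_fin in xb; rewrite lee_fin in bd0.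
    have xd0 : enorm x < d0 by exact: lt_le_trans xb bd0.
    have Dx : D x := hD x (lt_le_trans xd0 d0D).
    have ux : enorm (u x) <= d x := ud x (lt_le_trans xd0 d0r).
    have dxa : ((d x)%:E <= dsup D d b%:E)%E.
      by apply: ereal_sup_ubound; exists x => //; split => //; rewrite /eball /= lte_fin.
    case: (dsup D d b%:E) dxa => [a| |] //= dxa.
    rewrite lee_fin in dxa; rewrite lte_fin /pnorm /=.
    have ex0 := enorm_ge0 x; have eu0 := enorm_ge0 (u x).
    rewrite ltr_sqrt; nra.
  by rewrite ltry.
split => //; exact: le_trans claim2 claim1.
Qed.
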